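(* The set of modified ascent sequences equals the set of Cayley permutations avoiding the mesh patterns $\mathfrak{a}$ and $\mathfrak{b}$: $\mathrm{Modasc}=\mathrm{Cay}(\mathfrak{a},\mathfrak{b})$. Consequently $\{\mathfrak{a},\mathfrak{b}\}$ and $\{11,\mathfrak{f}\}$ are Wilf-equivalent over Cayley permutations, i.e. $|\mathrm{Cay}_n(\mathfrak{a},\mathfrak{b})|=|\mathrm{Cay}_n(11,\mathfrak{f})|$ for all $n$, where $\mathrm{Cay}_n(11,\mathfrak{f})$ is the set of Fishburn permutations of length $n$.
   Context: A Cayley permutation of length $n$ is a word $x=x(1)\cdots x(n)$ of positive integers in which every integer from $1$ to $\max(x)$ occurs; $\mathrm{Cay}_n$ is the set of these and $\mathrm{Cay}$ their union. Avoiding the pattern $11$ means having no repeated letter (i.e. being a permutation). Mesh patterns: a Cayley permutation $x$ contains $\mathfrak{a}$ if there are indices $i<j<n$ with $x(j)<x(i)=x(j+1)$. It contains $\mathfrak{b}$ if there is an index $i<n$ with $x(i)>x(i+1)$ and no index $m<i$ with $x(m)=x(i+1)$. $\mathrm{Cay}(\mathfrak{a},\mathfrak{b})$ is the set of Cayley permutations containing neither; $\mathrm{Cay}_n(\cdot)$ restricts to length $n$. Modified ascent sequences: $\mathrm{Modasc}_0=\{\text{empty word}\}$, $\mathrm{Modasc}_1=\{1\}$; for $n\ge2$, $x\in\mathrm{Modasc}_n$ iff there is $v\in\mathrm{Modasc}_{n-1}$ with last letter $b$ such that either $x=va$ with $1\le a\le b$, or $x=\tilde va$ with $b<a\le2+\mathrm{asc}(v)$,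 where $\mathrm{asc}(v)=|\{i:v(i)<v(i+1)\}|$ and $\tilde v$ is $v$ with every entry $c\ge a$ increased by one. $\mathrm{Modasc}=\bigcup_n\mathrm{Modasc}_n$. $\mathfrak{f}$ is the bivincular pattern $(231,\{1\},\{1\})$: a permutation $\pi$ contains it if there are indices $i$ and $k>i+1$ with $\pi(i)<\pi(i+1)$ and $\pi(k)=\pi(i)-1$. Permutations avoiding $\mathfrak{f}$ are the Fishburn permutations. *)

(* Defs.v *)
(* Words are seq nat; positions are 0-indexed internally
   (position p here = position p+1 in the paper). *)
From mathcomp Require Import all_boot.
Set Implicit Arguments. Unset Strict Implicit. Unset Printing Implicit Defensive.

Definition maxw (x : seq nat) : nat := foldr maxn 0 x.

Definition cayley (x : seq nat) : bool :=
  (0 \notin x) && all (fun v => v \in x) (iota 1 (maxw x)).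

Definition contains_a (x : seq nat) : bool :=
  has (fun i => has (fun j =>
     [&& i < j, j.+1 < size x, nth 0 x j < nth 0 x i & nth 0 x i == nth 0 x j.+1])
     (iota 0 (size x))) (iota 0 (size x)).

Definition contains_b (x : seq nat) : bool :=
  has (fun i => [&& i.+1 < size x, nth 0 x i.+1 < nth 0 x i &
                 ~~ has (fun m => nth 0 x m == nth 0 x i.+1) (iota 0 i)])
      (iota 0 (size x)).

(* bivincular pattern f = (231,{1},{1}): i, k > i+1, pi(i) < pi(i+1), pi(k) = pi(i) - 1 *)
Definition contains_f (x : seq nat) : bool :=
  has (fun i => has (fun k =>
     [&& i.+1 < k, k < size x, nth 0 x i < nth 0 x i.+1 & (nth 0 x k).+1 == nth 0 x i])
     (iota 0 (size x))) (iota 0 (size x)).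

Definition asc (v : seq nat) : nat :=
  count (fun i => (i.+1 < size v) && (nth 0 v i < nth 0 v i.+1)) (iota 0 (size v)).

Definition tilde (v : seq nat) (a : nat) : seq nat :=
  map (fun c => if a <= c then c.+1 else c) v.

Inductive modasc : seq nat -> Prop :=
| modasc0 : modasc [::]
| modasc1 : modasc [:: 1]
| modasc_weak : forall v a, modasc v -> v != [::] ->
    1 <= a -> a <= last 0 v -> modasc (rcons v a)
| modasc_strict : forall v a, modasc v -> v != [::] ->
    last 0 v < a -> a <= (asc v).+2 -> modasc (rcons (tilde v a) a).

(* Main.v *)
Require Import Defs.
From mathcomp Require Import all_boot zify.
Set Implicit Arguments. Unset Strict Implicit. Unset Printing Implicit Defensive.

Definition good (x : seq nat) := forall p, 0 < p < size x ->
  (nth 0 x p.-1 < nth 0 x p) = (nth 0 x p \notin take p x).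

Lemma memtakeP (x : seq nat) p v :
  reflect (exists2 r, (r < p) && (r < size x) & nth 0 x r = v) (v \in take p x).
Proof.
apply: (iffP (@nthP _ (take p x) v 0)) => -[r].
  rewrite size_take => hr.
  have hrp : r < p by move: hr; case: (ltnP p (size x)) => /= ? ; lia.
  rewrite nth_take // => <-; exists r => //; move: hr; case: (ltnP p (size x)) => /= ? ; lia.
move=> /andP [h1 h2] <-; exists r; first by rewrite size_take; case: (ltnP p (size x)) => /= ? ; lia.
by rewrite nth_take.
Qed.

Lemma goodP x : good x <-> ~~ contains_a x /\ ~~ contains_b x.
Proof.
split.
  move=> g; split.
    apply/hasP => [[i _ /hasP [j _ /and4P [ij jn lt /eqP eq]]]].
    have := g j.+1; rewrite /= jn -eq lt => /(_ isT) /esym /negP; apply; apply/memtakeP.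
    by exists i => //; apply/andP; split; lia.
  apply/hasP => [[i _ /and3P [i1n lt /hasP nh]]].
  have := g i.+1; rewrite /= i1n ltnNge (ltnW lt) /= => /(_ isT) /esym /negbFE /memtakeP [r /andP [r1 r2] e].
  have rne : r != i by apply/eqP => ri; move: lt; rewrite -e ri ltnn.
  apply: nh; exists r; first by rewrite mem_iota; lia.
  by rewrite e.
move=> [na nb] p /andP [p0 pn].
case: (boolP (nth 0 x p \in take p x)) => [/memtakeP [r /andP [r1 r2] e] | nin] /=.
  apply/negbTE/negP => lt; move/hasP: na; apply.
  exists r; first by rewrite mem_iota; lia.
  apply/hasP; exists p.-1; first by rewrite mem_iota; lia.
  have rp : r != p.-1 by apply/eqP => rp; move: lt; rewrite -e rp ltnn.
  rewrite e lt prednK //; apply/and4P; split => //; lia.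
apply/negP => /negP; rewrite -leqNgt => le.
move/hasP: nb; apply; exists p.-1; first by rewrite mem_iota; lia.
rewrite prednK // pn /=.
have ne : nth 0 x p.-1 != nth 0 x p.
  apply/eqP => e; move/memtakeP: nin; apply; exists p.-1 => //; apply/andP; split; lia.
apply/andP; split; first by rewrite ltn_neqAle eq_sym ne le.
apply/hasP => [[m]]; rewrite mem_iota => mi /eqP e.
move/memtakeP: nin; apply; exists m => //; apply/andP; split; lia.
Qed.

Lemma in_maxw x y : y \in x -> y <= maxw x.
Proof.
elim: x => //= z x IH; rewrite in_cons => /orP [/eqP -> | /IH h].
  by rewrite leq_maxl.
by rewrite (leq_trans h) // leq_maxr.
Qed.

Lemma maxw_in x : x != [::] -> maxw x \in x.
Proof.
elim: x => //= z x IH _; rewrite in_cons.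
case: x IH => [|z' x] IH /=; first by rewrite maxn0 eqxx.
have := IH isT; rewrite /maxn; case: ltnP => _ h; first by rewrite h orbT.
by rewrite eqxx.
Qed.

Definition dclosed (x : seq nat) := forall y u, y \in x -> 0 < u <= y -> u \in x.

Lemma cayleyP x : cayley x <-> (0 \notin x /\ dclosed x).
Proof.
rewrite /cayley; split.
  move=> /andP [h0 /allP h]; split => // y u yx /andP [u0 uy].
  by apply: h; rewrite mem_iota; have := in_maxw yx; lia.
move=> [h0 hd]; rewrite h0 /=; apply/allP => u; rewrite mem_iota => hu.
case: (x =P [::]) => [xe | /eqP xn].
  by move: hu; rewrite xe /=; lia.
by apply: (hd (maxw x)); [apply: maxw_in | lia].
Qed.

Lemma cayley_maxw x : cayley x -> perm_eq (undup x) (iota 1 (maxw x)).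
Proof.
move=> c; apply: uniq_perm; [exact: undup_uniq | exact: iota_uniq |].
move=> u; rewrite mem_undup mem_iota; apply/idP/idP.
  move=> ux; have := in_maxw ux; case/andP: c => h0 _.
  have : u != 0 by apply/eqP => e; move: h0; rewrite -e ux.
  lia.
move=> hu; case/andP: c => _ /allP; apply; rewrite mem_iota; lia.
Qed.

Lemma cayley_bound x : cayley x -> all (fun v => v <= size x) x.
Proof.
move=> c; apply/allP => v vx.
have h1 := in_maxw vx.
have : size (iota 1 (maxw x)) <= size x.
  apply: uniq_leq_size; first exact: iota_uniq.
  by move=> u; case/andP: c => _ /allP h /h.
rewrite size_iota; lia.
Qed.

Lemma good_rcons w a : good (rcons w a) <->
  good w /\ (w != [::] -> (last 0 w < a) = (a \notin w)).
Proof.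
have tk p : p <= size w -> take p (rcons w a) = take p w.
  by move=> hp; rewrite -cats1 takel_cat.
have nt p : p < size w -> nth 0 (rcons w a) p = nth 0 w p.
  by move=> hp; rewrite nth_rcons hp.
split.
  move=> g; split.
    move=> p /andP [p0 pw]; have := g p; rewrite size_rcons.
    rewrite tk ?(ltnW pw) // !nt //; [|lia]; apply; lia.
  move=> wn; have := g (size w); rewrite size_rcons leqnn.
  have sw : 0 < size w by move: wn; clear; case: w.
  rewrite sw tk // take_size [nth _ _ (size w)]nth_rcons ltnn eqxx nt; last by lia.
  by rewrite nth_last => ->.
move=> [g h] p; rewrite size_rcons => /andP [p0 pw].
case: (ltngtP p (size w)) => [pw' | pg | pe]; last first.
2: by lia.
2: by rewrite tk ?(ltnW pw') // !nt //; [apply: g|]; lia.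
have wn : w != [::] by apply/eqP => we; move: pe p0; rewrite we => ->.
rewrite pe tk // take_size [nth _ _ (size w)]nth_rcons ltnn eqxx nt; last by lia.
by rewrite nth_last h.
Qed.

Lemma asc_rcons w a : asc (rcons w a) = asc w + ((0 < size w) && (last 0 w < a)).
Proof.
rewrite /asc size_rcons -addn1 iotaD count_cat /= add0n.
have -> : ((size w).+1 < size w + 1) = false by lia.
rewrite andFb !addn0.
case: (lastP w) => [|u b] //=.
rewrite size_rcons -addn1 !iotaD !count_cat /= add0n last_rcons.
rewrite -[RHS]addnA; congr (_ + _).
  apply: eq_in_count => i; rewrite mem_iota => hi.
  rewrite !nth_rcons !size_rcons.
  have -> : i < (size u).+1 by lia.
  have -> : i.+1 < (size u).+1 by lia.
  have -> : i.+1 < size u + 1 + 1 by lia.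
  by have -> : i.+1 < size u + 1 by lia.
rewrite !nth_rcons !size_rcons.
have -> : (size u < (size u).+1) by lia.
have -> : ((size u).+1 < size u + 1 + 1) by lia.
have -> : ((size u).+1 < size u + 1) = false by lia.
have -> : ((size u).+1 < (size u).+1) = false by lia.
have -> : (size u < size u) = false by lia.
have -> : (0 < size u + 1) by lia.
by rewrite !eqxx /= !addn0.
Qed.

Lemma size_undup_rcons w (a : nat) :
  size (undup (rcons w a)) = size (undup w) + (a \notin w).
Proof.
have p : perm_eq (undup (rcons w a)) (undup (a :: w)).
  by apply: uniq_perm; rewrite ?undup_uniq // => u; rewrite !mem_undup mem_rcons.
rewrite (perm_size p) /=; case: (a \in w) => /=; lia.
Qed.

Lemma undup_asc x : good x -> x != [::] -> size (undup x) = (asc x).+1.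
Proof.
elim/last_ind: x => // w a IH /good_rcons [gw h] _.
case: (w =P [::]) => [-> // | /eqP wn].
rewrite size_undup_rcons asc_rcons IH // h //.
have -> : 0 < size w by move: wn; clear; case: w.
by rewrite /= addSn.
Qed.

Lemma maxw_asc x : cayley x -> good x -> x != [::] -> maxw x = (asc x).+1.
Proof.
move=> c g xn; rewrite -undup_asc //.
by rewrite (perm_size (cayley_maxw c)) size_iota.
Qed.

Lemma mono_inj (f : nat -> nat) (w : seq nat) : {in w &, forall c d, (f c < f d) = (c < d)} ->
  {in w &, forall c d, (f c == f d) = (c == d)}.
Proof.
move=> h c d cw dw; have h1 := h c d cw dw; have h2 := h d c dw cw.
case: (ltngtP c d) => [lt | lt | ->]; last by rewrite !eqxx.
  by rewrite lt in h1; rewrite ?(ltn_eqF lt) (ltn_eqF h1).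
by rewrite lt in h2; rewrite ?(gtn_eqF lt) (gtn_eqF h2).
Qed.

Lemma good_map (f : nat -> nat) (w : seq nat) : {in w &, forall c d, (f c < f d) = (c < d)} ->
  good (map f w) <-> good w.
Proof.
move=> h; have hi := mono_inj h.
have key p : 0 < p < size w ->
  ((nth 0 (map f w) p.-1 < nth 0 (map f w) p) = (nth 0 (map f w) p \notin take p (map f w)))
  = ((nth 0 w p.-1 < nth 0 w p) = (nth 0 w p \notin take p w)).
  move=> /andP [p0 pw].
  have q1 : p.-1 < size w by lia.
  have m1 : nth 0 w p.-1 \in w by apply: mem_nth.
  have m2 : nth 0 w p \in w by apply: mem_nth.
  rewrite !(nth_map 0) //.
  rewrite h // -(map_take p f); congr (_ = ~~ _).
  apply/mapP/idP => [[c ct e] | ct]; last by exists (nth 0 w p).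
  have cw : c \in w by apply: mem_take ct.
  by move/eqP: e; rewrite hi // => /eqP ->.
split => g p hp.
  have hp' : 0 < p < size (map f w) by rewrite size_map.
  by have := g p hp'; rewrite key.
rewrite size_map in hp; rewrite key //; exact: g.
Qed.

Lemma asc_map (f : nat -> nat) (w : seq nat) : {in w &, forall c d, (f c < f d) = (c < d)} ->
  asc (map f w) = asc w.
Proof.
move=> h; rewrite /asc size_map; apply: eq_in_count => i _ /=.
case: (ltnP i.+1 (size w)) => hi //=.
have q1 : i < size w by lia.
rewrite !(nth_map 0) // h //; apply: mem_nth => //.
Qed.

Lemma last_map0 (f : nat -> nat) (w : seq nat) : w != [::] -> last 0 (map f w) = f (last 0 w).
Proof. by case: w => // z w _ /=; rewrite last_map. Qed.

Lemma last_in w : w != [::] -> last 0 w \in w.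
Proof. by case: w => // z w _ /=; rewrite mem_last. Qed.

Lemma modasc_good x : modasc x -> cayley x /\ good x.
Proof.
elim => {x} [| | v a _ [cv gv] vn a1 al | v a _ [cv gv] vn la aa].
- by split => // p /=; lia.
- split => //; move=> p /=; lia.
- have av : a \in v.
    by case/cayleyP: cv => _ hd; apply: (hd (last 0 v)); [apply: last_in | lia].
  split.
    apply/cayleyP; case/cayleyP: cv => h0 hd; split.
      by rewrite mem_rcons in_cons negb_or h0 andbT; apply/eqP => e; move: a1; rewrite -e.
    move=> y u; rewrite !mem_rcons !in_cons => /orP [/eqP -> | yv] hu; apply/orP; right.
      by apply: (hd a).
    by apply: (hd y).
  apply/good_rcons; split => // _; rewrite av ltnNge al.
  done.
- set f := fun c => if a <= c then c.+1 else c.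
  have fm : {in v &, forall c d, (f c < f d) = (c < d)}.
    by move=> c d _ _; rewrite /f; case: (leqP a c); case: (leqP a d); lia.
  have anot : a \notin tilde v a.
    by apply/mapP => [[c _]]; case: (leqP a c); lia.
  have lt : last 0 (tilde v a) = last 0 v.
    rewrite /tilde last_map0 //; case: (leqP a (last 0 v)) => //; lia.
  split; last first.
    apply/good_rcons; split; first by rewrite /tilde; apply/(good_map fm).
    by move=> _; rewrite lt la anot.
  have mx := maxw_asc cv gv vn.
  case/cayleyP: cv => h0 hd.
  have a1 : 0 < a by lia.
  apply/cayleyP; split.
    rewrite mem_rcons in_cons negb_or; apply/andP; split; first by lia.
    apply/mapP => [[c cv]]; case: (leqP a c) => hc //.
    by move=> e; move: cv h0; rewrite -e => ->.
  move=> y u yx /andP [u0 uy]; rewrite mem_rcons in_cons.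
  case: (ltngtP u a) => [ua | ua | -> ]; last by [].
    apply/orP; right; apply/mapP; exists u; last by rewrite /f; case: leqP; lia.
    apply: (hd (maxw v)); [exact: maxw_in | lia].
  apply/orP; right.
  move: yx; rewrite mem_rcons in_cons => /orP [/eqP ya | /mapP [c cv yc]]; first by lia.
  move: yc; rewrite /f; case: (leqP a c) => hc yc; last by lia.
  apply/mapP; exists u.-1.
    apply: (hd c) => //; lia.
  case: leqP; lia.
Qed.

Lemma good_modasc n x : size x <= n -> cayley x -> good x -> modasc x.
Proof.
elim: n x => [|n IH] x.
  by case: x => // _ _ _; exact: modasc0.
case/lastP: x => [|w a]; first by move=> *; exact: modasc0.
rewrite size_rcons ltnS => sz cx /good_rcons [gw h].
case/cayleyP: (cx) => h0 hd.
have a1 : 0 < a.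
  by move: h0; rewrite mem_rcons in_cons negb_or => /andP [/eqP ? _]; lia.
case: (w =P [::]) => [we | /eqP wn].
  rewrite we /=; have : 1 \in [:: a] by rewrite -[[:: a]]/(rcons [::] a) -we; apply: (hd a);
    [rewrite mem_rcons mem_head | lia].
  by rewrite inE => /eqP <-; exact: modasc1.
have := h wn.
case: (boolP (a \in w)) => aw /= hl.
  have la : a <= last 0 w by rewrite leqNgt hl.
  apply: modasc_weak => //; apply: IH => //.
  apply/cayleyP; split.
    by apply: contra h0; rewrite mem_rcons in_cons => ->; rewrite orbT.
  move=> y u yw hu; have := hd y u; rewrite !mem_rcons !in_cons yw orbT => /(_ isT hu).
  by case/orP => // /eqP ->.
set g := fun c => if a < c then c.-1 else c.
set v := map g w.
have tv : tilde v a = w.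
  rewrite /tilde /v -map_comp -[RHS]map_id; apply/eq_in_map => c cw /=.
  have ca : c != a by apply: contraNneq aw => <-.
  rewrite /g; case: (ltnP a c) => hc; case: leqP; lia.
have gm : {in w &, forall c d, (g c < g d) = (c < d)}.
  move=> c d cw dw.
  have ca : c != a by apply: contraNneq aw => <-.
  have da : d != a by apply: contraNneq aw => <-.
  rewrite /g; case: (ltnP a c); case: (ltnP a d); lia.
have vn : v != [::] by rewrite /v; move: wn; clear; case: w.
have lv : last 0 v = last 0 w.
  by rewrite /v last_map0 // /g ltnNge (ltnW hl).
rewrite -tv; apply: modasc_strict => //.
- apply: IH; first by rewrite size_map.
    apply/cayleyP; split.
      apply/mapP => [[c cw]]; rewrite /g; case: ltnP => hc.
        by move=> ?; lia.
      by move=> e; move: h0; rewrite mem_rcons in_cons negb_or e cw andbF.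
    move=> y u /mapP [c cw ->] /andP [u0 uy].
    have ca : c != a by apply: contraNneq aw => <-.
    have cx' : c \in rcons w a by rewrite mem_rcons in_cons cw orbT.
    apply/mapP; case: (ltnP u a) => ua.
      exists u; last by rewrite /g; case: ltnP; lia.
      have : u \in rcons w a by apply: (hd c) => //; move: uy; rewrite /g; case: ltnP; lia.
      by rewrite mem_rcons in_cons => /orP [/eqP ?|//]; lia.
    exists u.+1; last by rewrite /g; case: ltnP; lia.
    move: uy; rewrite /g; case: ltnP => hc uy; last by lia.
    have : u.+1 \in rcons w a by apply: (hd c) => //; lia.
    by rewrite mem_rcons in_cons => /orP [/eqP ?|//]; lia.
  by rewrite /v; apply/(good_map gm).
- by rewrite lv.
- have := in_maxw (x := rcons w a) (y := a); rewrite mem_rcons mem_head => /(_ isT).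
  have gx : good (rcons w a) by apply/good_rcons; split => // _; rewrite aw.
  have xn : rcons w a != [::] by case: (w).
  rewrite maxw_asc //.
  rewrite asc_rcons /v asc_map // hl.
  have -> : 0 < size w by move: wn; clear; case: w.
  by rewrite addn1.
Qed.

Theorem part1 x : modasc x <-> [/\ cayley x, ~~ contains_a x & ~~ contains_b x].
Proof.
split.
  by move=> /modasc_good [c /goodP [na nb]]; split.
by move=> [c na nb]; apply: (@good_modasc (size x)) => //; apply/goodP.
Qed.

Definition lek (x : seq nat) : rel nat := fun p q =>
  (nth 0 x p < nth 0 x q) || ((nth 0 x p == nth 0 x q) && (q <= p)).

Lemma lek_total x : total (lek x).
Proof. move=> p q; rewrite /lek; case: (ltngtP (nth 0 x p) (nth 0 x q)) => //= _; lia. Qed.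

Lemma lek_trans x : transitive (lek x).
Proof.
move=> q p r; rewrite /lek.
case: (ltngtP (nth 0 x p) (nth 0 x q)) => //= h1;
case: (ltngtP (nth 0 x q) (nth 0 x r)) => //= h2;
case: (ltngtP (nth 0 x p) (nth 0 x r)) => //= h3; lia.
Qed.

Lemma lek_anti x : antisymmetric (lek x).
Proof.
move=> p q; rewrite /lek.
case: (ltngtP (nth 0 x p) (nth 0 x q)) => //= h1; lia.
Qed.

Lemma lek_refl x : reflexive (lek x).
Proof. by move=> p; rewrite /lek eqxx leqnn orbT. Qed.

Definition Ts x := sort (lek x) (iota 0 (size x)).
Definition Tf x := map succn (Ts x).

Lemma perm_facts (s : seq nat) n : perm_eq s (iota 0 n) ->
  [/\ uniq s, size s = n, forall p, (p \in s) = (p < n) &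
      forall j, j < n -> nth 0 s j < n].
Proof.
move=> h; have u : uniq s by rewrite (perm_uniq h) iota_uniq.
have sz : size s = n by rewrite (perm_size h) size_iota.
have m : forall p, (p \in s) = (p < n) by move=> p; rewrite (perm_mem h) mem_iota.
split => // j jn; rewrite -m; apply: mem_nth; by rewrite sz.
Qed.

Lemma perm_nth_lt (s : seq nat) n j : perm_eq s (iota 0 n) -> j < n -> nth 0 s j < n.
Proof. by move=> h; case: (perm_facts h) => _ _ _; apply. Qed.

Lemma index_lt (s : seq nat) n p : perm_eq s (iota 0 n) -> p < n -> index p s < n.
Proof.
move=> h pn; case: (perm_facts h) => u sz m _.
by rewrite -sz index_mem m.
Qed.

Lemma nth_index_p (s : seq nat) n p : perm_eq s (iota 0 n) -> p < n -> nth 0 s (index p s) = p.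
Proof. by move=> h pn; case: (perm_facts h) => u sz m _; rewrite nth_index // m. Qed.

Lemma index_nth_p (s : seq nat) n j : perm_eq s (iota 0 n) -> j < n -> index (nth 0 s j) s = j.
Proof. by move=> h jn; case: (perm_facts h) => u sz m _; rewrite index_uniq // sz. Qed.

Lemma Ts_perm x : perm_eq (Ts x) (iota 0 (size x)).
Proof. by rewrite /Ts perm_sort. Qed.

Lemma Ts_sorted x : sorted (lek x) (Ts x).
Proof. exact: (sort_sorted (@lek_total x)). Qed.

Lemma Ts_le x i j : i <= j -> j < size x -> lek x (nth 0 (Ts x) i) (nth 0 (Ts x) j).
Proof.
move=> ij jn; have [_ sz _ _] := perm_facts (Ts_perm x).
have := sorted_leq_nth (@lek_trans x) (@lek_refl x) 0 (Ts_sorted x); apply => //;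
  rewrite inE sz; lia.
Qed.

Lemma Ts_idx x u v : u < size x -> v < size x -> lek x u v -> u != v ->
  index u (Ts x) < index v (Ts x).
Proof.
move=> un vn l uv; have h := Ts_perm x.
rewrite ltnNge; apply/negP => le.
have := Ts_le le (index_lt h un); rewrite !(nth_index_p h) // => l2.
by have := @lek_anti x u v; rewrite l l2 => /(_ isT) e; rewrite e eqxx in uv.
Qed.

Definition endb (s : seq nat) (c : nat -> nat) j :=
  (nth 0 s j == 0) || ((index (nth 0 s j).-1 s < j) && (c (index (nth 0 s j).-1 s) < c j)).

Fixpoint labs (s : seq nat) k : seq nat :=
  if k is k'.+1 then let cs := labs s k' in rcons cs (nth 0 cs k' + endb s (nth 0 cs) k')
  else [:: 1].

Definition cl s j := nth 0 (labs s j) j.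
Definition Us (s : seq nat) := [seq cl s (index p s) | p <- iota 0 (size s)].

Lemma size_labs s k : size (labs s k) = k.+1.
Proof. by elim: k => //= k IH; rewrite size_rcons IH. Qed.

Lemma labs_nth s k i : i <= k -> nth 0 (labs s k) i = cl s i.
Proof.
elim: k => [|k IH]; first by rewrite leqn0 => /eqP ->.
rewrite leq_eqVlt => /orP [/eqP -> //| ].
rewrite ltnS => ik /=; rewrite nth_rcons size_labs ltnS ik; exact: IH.
Qed.

Lemma endb_ext s c c' j : (forall i, i <= j -> c i = c' i) -> endb s c j = endb s c' j.
Proof.
move=> h; rewrite /endb; case: ltnP => //= hi.
by rewrite !h //; lia.
Qed.

Lemma cl_rec s j : cl s j.+1 = cl s j + endb s (cl s) j.
Proof.
rewrite {1}/cl /= nth_rcons size_labs ltnn eqxx labs_nth //.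
have -> // : endb s (nth 0 (labs s j)) j = endb s (cl s) j.
by apply: endb_ext => i ij; exact: labs_nth.
Qed.

Lemma cl0 s : cl s 0 = 1.
Proof. by []. Qed.

Lemma Ts_succ x j : j.+1 < size x ->
  (nth 0 x (nth 0 (Ts x) j.+1) == nth 0 x (nth 0 (Ts x) j)) =
  (nth 0 x (nth 0 (Ts x) j) \in take (nth 0 (Ts x) j) x).
Proof.
move=> jn; have h := Ts_perm x.
set p := nth 0 (Ts x) j; set q := nth 0 (Ts x) j.+1.
have pn : p < size x by apply: (perm_nth_lt h); lia.
have qn : q < size x by apply: (perm_nth_lt h); lia.
have pq : p != q.
  apply/eqP => e; have := index_nth_p h (ltnW jn); rewrite -/p e /q (index_nth_p h jn); lia.
have l := Ts_le (leqnSn j) jn; rewrite -/p -/q in l.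
apply/eqP/memtakeP => [e | [r /andP [rp rn] e]].
  exists q => //; apply/andP; split => //.
  move: l; rewrite /lek e eqxx ltnn /= => qp.
  by rewrite ltn_neqAle qp eq_sym pq.
have pr : lek x p r by rewrite /lek e eqxx (ltnW rp) orbT.
have pr' : p != r by apply/eqP => e'; move: rp; rewrite e' ltnn.
have ir := Ts_idx pn rn pr pr'.
rewrite (index_nth_p h (ltnW jn)) in ir.
have := Ts_le ir (index_lt h rn); rewrite (nth_index_p h rn) -/q.
move: l; rewrite /lek e; case: (ltngtP (nth 0 x p) (nth 0 x q)) => //=.
Qed.

Lemma Ts_step x j : cayley x -> j.+1 < size x ->
  nth 0 x (nth 0 (Ts x) j) <= nth 0 x (nth 0 (Ts x) j.+1) <= (nth 0 x (nth 0 (Ts x) j)).+1.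
Proof.
move=> /cayleyP [h0 hd] jn; have h := Ts_perm x.
set p := nth 0 (Ts x) j; set q := nth 0 (Ts x) j.+1.
have pn : p < size x by apply: (perm_nth_lt h); lia.
have qn : q < size x by apply: (perm_nth_lt h); lia.
have l := Ts_le (leqnSn j) jn; rewrite -/p -/q in l.
have l1 : nth 0 x p <= nth 0 x q by move: l; rewrite /lek; case: ltngtP.
rewrite l1 /=; rewrite leqNgt; apply/negP => big.
set u := (nth 0 x p).+1.
have ux : u \in x by apply: (hd (nth 0 x q)); [apply: mem_nth | lia].
set r := index u x.
have rn : r < size x by rewrite index_mem.
have er : nth 0 x r = u by rewrite nth_index.
have pr : lek x p r by rewrite /lek er ltnSn.
have rq : lek x r q by rewrite /lek er big.
have n1 : p != r by apply/eqP => e; move: er; rewrite -e /u; lia.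
have n2 : r != q by apply/eqP => e; move: er big; rewrite e /u; lia.
have i1 := Ts_idx pn rn pr n1.
have i2 := Ts_idx rn qn rq n2.
move: i1 i2; rewrite /p /q !(index_nth_p h) //; lia.
Qed.

Lemma Ts_first x : cayley x -> 0 < size x -> nth 0 x (nth 0 (Ts x) 0) = 1.
Proof.
move=> /cayleyP [h0 hd] n0; have h := Ts_perm x.
have nz : forall y, y \in x -> 0 < y.
  by move=> y yx; rewrite lt0n; apply: contraNneq h0 => <-.
have x1 : 1 \in x.
  apply: (hd (nth 0 x 0)); first exact: mem_nth.
  by rewrite /= nz // mem_nth.
set r := index 1 x.
have rn : r < size x by rewrite index_mem.
have := Ts_le (leq0n (index r (Ts x))) (index_lt h rn).
rewrite (nth_index_p h rn) /lek nth_index //.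
have : 0 < nth 0 x (nth 0 (Ts x) 0) by apply: nz; apply: mem_nth; apply: perm_nth_lt h n0.
lia.
Qed.

Lemma cl_Ts x : cayley x -> good x -> forall j, j < size x ->
  cl (Ts x) j = nth 0 x (nth 0 (Ts x) j).
Proof.
move=> cx gx; have h := Ts_perm x.
suff : forall j, j < size x -> forall i, i <= j -> cl (Ts x) i = nth 0 x (nth 0 (Ts x) i).
  by move=> H j jn; apply: (H j).
elim => [|j IH] jn i.
  by rewrite leqn0 => /eqP ->; rewrite cl0 Ts_first.
rewrite leq_eqVlt => /orP [/eqP -> | ]; last by rewrite ltnS; apply: IH; lia.
have IHj := IH (ltnW jn).
rewrite cl_rec IHj //.
set p := nth 0 (Ts x) j; set q := nth 0 (Ts x) j.+1.
have pn : p < size x by apply: (perm_nth_lt h); lia.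
have jp : index p (Ts x) = j by apply: (index_nth_p h); lia.
have eb : endb (Ts x) (cl (Ts x)) j = (nth 0 x q != nth 0 x p).
  rewrite /q Ts_succ // -/p /endb -/p.
  case: (p =P 0) => [p0 | /eqP p0] /=; first by rewrite p0 take0.
  have gp := gx p; rewrite pn lt0n p0 /= in gp.
  rewrite -(gp isT).
  have p1n : p.-1 < size x by lia.
  set ii := index p.-1 (Ts x).
  have ei : nth 0 (Ts x) ii = p.-1 by apply: (nth_index_p h).
  case: (ltnP ii j) => ij /=.
    by rewrite !IHj ?ei //; lia.
  apply/esym/negbTE/negP => lt.
  have l : lek x p.-1 p by rewrite /lek lt.
  have ne : p.-1 != p by lia.
  have := Ts_idx p1n pn l ne; rewrite jp -/ii; lia.
rewrite eb; have := Ts_step cx jn; rewrite -/p -/q.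
case: (nth 0 x q =P nth 0 x p) => [-> | ne] /=; lia.
Qed.

Lemma Us_Ts x : cayley x -> good x -> Us (Ts x) = x.
Proof.
move=> cx gx; have h := Ts_perm x.
have sz : size (Ts x) = size x by case: (perm_facts h).
apply: (@eq_from_nth _ 0); first by rewrite size_map size_iota sz.
move=> p; rewrite size_map size_iota sz => pn.
rewrite (nth_map 0); last by rewrite size_iota sz.
rewrite nth_iota ?sz // add0n cl_Ts //; last exact: index_lt h pn.
by rewrite (nth_index_p h pn).
Qed.

Lemma perm_cayley (s : seq nat) n : perm_eq s (iota 1 n) -> cayley s.
Proof.
move=> h; apply/cayleyP; split; first by rewrite (perm_mem h) mem_iota.
move=> y u; rewrite !(perm_mem h) !mem_iota; lia.
Qed.

Lemma Tf_F x : cayley x -> good x ->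
  [&& cayley (Tf x), uniq (Tf x) & ~~ contains_f (Tf x)].
Proof.
move=> cx gx; have h := Ts_perm x.
have [u sz m _] := perm_facts h.
have pT : perm_eq (Tf x) (iota 1 (size x)).
  by rewrite /Tf (iotaDl 1 0) /=; apply: perm_map.
rewrite (perm_cayley pT) (perm_uniq pT) iota_uniq /=.
apply/hasP => [[i _ /hasP [k _ /and4P [ik kn lt /eqP e]]]].
rewrite /Tf size_map sz in kn.
have i1n : i.+1 < size x by lia.
rewrite !(nth_map 0) ?sz // in lt e; try lia.
set p := nth 0 (Ts x) i in lt e; set q := nth 0 (Ts x) i.+1 in lt.
move: e => [e].
have pn : p < size x by apply: (perm_nth_lt h); lia.
have p0 : 0 < p by lia.
have l := Ts_le (leqnSn i) i1n; rewrite -/p -/q in l.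
have ne : nth 0 x q != nth 0 x p.
  apply/eqP => e2; move: l; rewrite /lek e2 eqxx ltnn /=; lia.
move: ne; rewrite /q Ts_succ // -/p => nin.
have gp := gx p; rewrite pn p0 /= in gp; rewrite -(gp isT) in nin.
have l2 : lek x p.-1 p by rewrite /lek nin.
have p1n : p.-1 < size x by lia.
have ne2 : p.-1 != p by lia.
have := Ts_idx p1n pn l2 ne2.
have ip : index p (Ts x) = i by rewrite /p (index_nth_p h) //; lia.
have ik' : index p.-1 (Ts x) = k by rewrite -e /= (index_nth_p h).
rewrite ip ik'; lia.
Qed.

Definition nof (s : seq nat) := forall i k, i.+1 < k -> k < size s ->
  nth 0 s i < nth 0 s i.+1 -> (nth 0 s k).+1 != nth 0 s i.

Lemma cl_mono s i k : i <= k -> cl s i <= cl s k.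
Proof.
elim: k => [|k IH]; first by rewrite leqn0 => /eqP ->.
rewrite leq_eqVlt => /orP [/eqP -> // | ]; rewrite ltnS => ik.
by rewrite cl_rec (leq_trans (IH ik)) // leq_addr.
Qed.

Lemma cl_pos s j : 0 < cl s j.
Proof. by apply: (leq_trans _ (cl_mono s (leq0n j))); rewrite cl0. Qed.

Lemma cl_endb_lt s i k j : i <= k -> k < j -> endb s (cl s) k -> cl s i < cl s j.
Proof.
move=> ik kj eb; apply: (leq_trans _ (cl_mono s kj)).
by rewrite cl_rec eb addn1 ltnS cl_mono.
Qed.

Lemma perm_neq_succ (s : seq nat) n j : perm_eq s (iota 0 n) -> j.+1 < n ->
  nth 0 s j != nth 0 s j.+1.
Proof.
move=> h jn; apply/eqP => e.
have := index_nth_p h (ltnW jn); rewrite e (index_nth_p h jn); lia.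
Qed.

Lemma Dpart s n j : perm_eq s (iota 0 n) ->
  (forall k, k < j -> k.+1 < n -> nth 0 s k < nth 0 s k.+1 -> endb s (cl s) k) ->
  forall i, i < j -> j < n -> cl s j <= cl s i -> nth 0 s j < nth 0 s i.
Proof.
move=> h; elim: j => [|j IH] // E i ij jn c.
have nb : ~~ endb s (cl s) j.
  apply/negP => eb; have ij' : i <= j by lia.
  have := cl_endb_lt ij' (ltnSn j) eb; lia.
have dj : nth 0 s j.+1 < nth 0 s j.
  have := perm_neq_succ h jn; case: ltngtP => // lt _.
  by move: nb; rewrite E.
move: ij; rewrite ltnS leq_eqVlt => /orP [/eqP -> // | ij].
apply: (ltn_trans dj); apply: IH => //; first by move=> k kj; apply: E; lia.
  lia.
by apply: leq_trans c; apply: cl_mono.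
Qed.

Lemma Eprop s n : perm_eq s (iota 0 n) -> nof s ->
  forall j, j.+1 < n -> nth 0 s j < nth 0 s j.+1 -> endb s (cl s) j.
Proof.
move=> h hf; have [u sz m _] := perm_facts h.
elim/ltn_ind => j IH jn lt.
rewrite /endb; set p := nth 0 s j.
case: (p =P 0) => [-> // | /eqP p0] /=.
have pn : p < n by apply: (perm_nth_lt h); lia.
have p1n : p.-1 < n by lia.
set i := index p.-1 s.
have ei : nth 0 s i = p.-1 by apply: (nth_index_p h).
have iln : i < n by apply: (index_lt h).
have ij : i < j.
  case: (ltngtP i j) => // [ji | ie].
    case: (ltngtP i j.+1) => [ | ji2 | ie2].
    - lia.
    - have := hf j i ji2; rewrite sz => /(_ iln lt); rewrite ei -/p; lia.
    - by move: lt; rewrite -ie2 ei -/p; lia.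
  by move: ei; rewrite ie -/p; lia.
rewrite ij /= ltnNge; apply/negP => c.
have := Dpart h (j := j) (fun k kj kn lk => IH k kj kn lk) ij (ltnW jn) c.
by rewrite ei -/p; lia.
Qed.

Lemma Dfull s n : perm_eq s (iota 0 n) -> nof s ->
  forall i j, i < j -> j < n -> cl s j <= cl s i -> nth 0 s j < nth 0 s i.
Proof.
move=> h hf i j; apply: Dpart => // k _; exact: Eprop h hf k.
Qed.

Lemma Us_nth' s n p : perm_eq s (iota 0 n) -> p < n -> nth 0 (Us s) p = cl s (index p s).
Proof.
move=> h pn; have [u sz m _] := perm_facts h.
rewrite (nth_map 0) ?size_iota ?sz // nth_iota ?sz //.
Qed.

Lemma Us_nth s n j : perm_eq s (iota 0 n) -> j < n -> nth 0 (Us s) (nth 0 s j) = cl s j.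
Proof.
move=> h jn; rewrite (Us_nth' h); last exact: perm_nth_lt h jn.
by rewrite (index_nth_p h jn).
Qed.

Lemma Ts_Us s n : perm_eq s (iota 0 n) -> nof s -> Ts (Us s) = s.
Proof.
move=> h hf; have [u sz m _] := perm_facts h.
have so : sorted (lek (Us s)) s.
  apply/(sortedP 0) => j; rewrite sz => jn.
  rewrite /lek (Us_nth h (ltnW jn)) (Us_nth h jn) cl_rec.
  case eb: (endb s (cl s) j); first by rewrite addn1 ltnSn.
  rewrite addn0 ltnn eqxx /=.
  have := Eprop h hf jn; rewrite eb.
  have := perm_neq_succ h jn; case: ltngtP => //.
    by move=> _ _ /(_ isT).
rewrite /Ts size_map size_iota sz.
apply: (sorted_eq (@lek_trans _) (@lek_anti _));
  [exact: (sort_sorted (@lek_total _)) | exact: so | by rewrite perm_sort perm_sym].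
Qed.

Lemma cl_int s j u : 0 < u <= cl s j -> exists2 i, i <= j & cl s i = u.
Proof.
elim: j => [|j IH] hu.
  by exists 0 => //; move: hu; rewrite cl0; lia.
case: (u =P cl s j.+1) => [-> | ne]; first by exists j.+1.
have : 0 < u <= cl s j by move: hu ne; rewrite cl_rec; case: endb => /=; lia.
by move/IH => [i ij e]; exists i => //; lia.
Qed.

Lemma Us_A s n : perm_eq s (iota 0 n) -> nof s -> cayley (Us s) /\ good (Us s).
Proof.
move=> h hf; have [u sz m _] := perm_facts h.
have szU : size (Us s) = n by rewrite size_map size_iota.
split.
  apply/cayleyP; split.
    by apply/mapP => [[p _ e]]; move: (cl_pos s (index p s)); rewrite -e.
  move=> y v /mapP [p]; rewrite mem_iota sz => pn -> hv.
  have [i ij e] := cl_int hv.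
  have jn : index p s < n by apply: index_lt h _; lia.
  have iln : i < n by lia.
  rewrite -e -(Us_nth h iln); apply: mem_nth; rewrite szU; exact: perm_nth_lt h iln.
move=> p; rewrite szU => /andP [p0 pn].
have p1n : p.-1 < n by lia.
set j := index p s; set ii := index p.-1 s.
have jn : j < n by exact: index_lt h pn.
have iin : ii < n by exact: index_lt h p1n.
have ej : nth 0 s j = p by exact: nth_index_p h pn.
have ei : nth 0 s ii = p.-1 by exact: nth_index_p h p1n.
rewrite (Us_nth' h pn) (Us_nth' h p1n) -/j -/ii.
have A : (cl s ii < cl s j) = ((j.+1 == n) || endb s (cl s) j).
  case: (j.+1 =P n) => [jN | jN] /=.
    have le : cl s ii <= cl s j by apply: cl_mono; lia.
    rewrite ltn_neqAle le andbT; apply/negP => /eqP e.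
    have iij : ii < j by case: (ltngtP ii j) ei => // [ | ->]; [lia | rewrite ej; lia].
    have := Dfull h hf iij jn; rewrite e leqnn ej ei => /(_ isT); lia.
  rewrite /endb ej (negbTE (lt0n_neq0 p0)) /= -/ii.
  case: (ltnP ii j) => /= iij //.
  by apply/negbTE; rewrite -leqNgt; apply: cl_mono.
rewrite A; apply/esym.
case: (j.+1 =P n) => [jN | jN] /=.
  apply/negP => /memtakeP [r /andP [rp rn]]; rewrite szU in rn.
  rewrite (Us_nth' h rn) => e.
  set k := index r s in e.
  have kn : k < n by exact: index_lt h rn.
  have ek : nth 0 s k = r by exact: nth_index_p h rn.
  have kj : k < j.
    case: (ltngtP k j) => // [ | e2]; first by lia.
    by move: ek; rewrite e2 ej; lia.
  have := Dfull h hf kj jn; rewrite e leqnn ek ej => /(_ isT); lia.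
have j1n : j.+1 < n by lia.
case eb: (endb s (cl s) j) => /=.
  apply/negP => /memtakeP [r /andP [rp rn]]; rewrite szU in rn.
  rewrite (Us_nth' h rn) => e.
  set k := index r s in e.
  have kn : k < n by exact: index_lt h rn.
  have ek : nth 0 s k = r by exact: nth_index_p h rn.
  case: (ltngtP k j) => [kj | jk | e2].
  - have := Dfull h hf kj jn; rewrite e leqnn ek ej => /(_ isT); lia.
  - have := cl_endb_lt (leqnn j) jk eb; rewrite e; lia.
  - by move: ek; rewrite e2 ej; lia.
apply/negbF/memtakeP; exists (nth 0 s j.+1).
  have lt : nth 0 s j.+1 < p.
    have := Eprop h hf j1n; rewrite eb ej.
    have := perm_neq_succ h j1n; rewrite ej; case: ltngtP => //.
    by move=> _ _ /(_ isT).
  rewrite lt szU /=; exact: perm_nth_lt h j1n.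
by rewrite (Us_nth h j1n) cl_rec eb addn0.
Qed.

Lemma card_le n (P Q : pred (seq nat)) (f g : seq nat -> seq nat) :
  (forall y, P y -> [/\ Q (f y), g (f y) = y & size (f y) = size y]) ->
  (forall y, Q y -> all (fun v => v <= size y) y) ->
  #|[set t : n.-tuple 'I_n.+1 | P (map val t)]| <= #|[set t : n.-tuple 'I_n.+1 | Q (map val t)]|.
Proof.
move=> hPQ hb.
pose h := fun t : n.-tuple 'I_n.+1 =>
  (insubd t (map (@inord n) (f (map val t))) : n.-tuple 'I_n.+1).
have key : forall t : n.-tuple 'I_n.+1, P (map val t) -> map val (h t) = f (map val t).
  move=> t Pt; have [Qf _ sf] := hPQ _ Pt.
  have szt : size (map val t) = n by rewrite size_map size_tuple.
  rewrite /h insubdK; last by rewrite unfold_in /= size_map sf szt.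
  rewrite -map_comp -[RHS]map_id; apply/eq_in_map => v vf /=.
  apply: inordK; have := hb _ Qf; move/allP/(_ v vf); rewrite sf szt; lia.
have inj : {in [set t : n.-tuple 'I_n.+1 | P (map val t)] &, injective h}.
  move=> t1 t2; rewrite !inE => P1 P2 e.
  have : f (map val t1) = f (map val t2) by rewrite -!key // e.
  move=> ef; have := hPQ _ P1; have := hPQ _ P2; case=> _ g2 _; case=> _ g1 _.
  have : map val t1 = map val t2 by rewrite -g1 -g2 ef.
  by move/(inj_map val_inj) => e2; apply: val_inj.
rewrite -(card_in_imset inj); apply: subset_leq_card.
apply/subsetP => _ /imsetP [t Pt ->]; rewrite inE in Pt; rewrite inE key //.
by have [] := hPQ _ Pt.
Qed.

Definition Uf (p : seq nat) := Us (map predn p).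

Lemma F_perm (p : seq nat) : cayley p -> uniq p -> perm_eq p (iota 1 (size p)).
Proof.
move=> c u; have h := cayley_maxw c; rewrite undup_id // in h.
by have := perm_size h; rewrite size_iota => ->.
Qed.

Lemma pred_perm (p : seq nat) n : perm_eq p (iota 1 n) -> perm_eq (map predn p) (iota 0 n).
Proof.
move=> h; have := perm_map predn h.
by rewrite (iotaDl 1 0) -map_comp map_id.
Qed.

Lemma pos_of (p : seq nat) : cayley p -> forall v, v \in p -> 0 < v.
Proof. by case/cayleyP => h0 _ v vp; rewrite lt0n; apply: contraNneq h0 => <-. Qed.

Lemma nof_of (p : seq nat) : cayley p -> ~~ contains_f p -> nof (map predn p).
Proof.
move=> c nf i k ik; rewrite size_map => kn.
have pos := pos_of c.
have i1n : i.+1 < size p by lia.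
have in_ : i < size p by lia.
rewrite !(nth_map 0) //.
have a1 := pos _ (mem_nth 0 in_); have a2 := pos _ (mem_nth 0 i1n);
have a3 := pos _ (mem_nth 0 kn).
move=> lt; apply/negP => /eqP e; move/hasP: nf; apply.
exists i; first by rewrite mem_iota; lia.
apply/hasP; exists k; first by rewrite mem_iota; lia.
apply/and4P; split => //; move: a1 a2 a3 lt e; set A := nth 0 p i; set C := nth 0 p k; set B := nth 0 p i.+1; [lia | move=> *; apply/eqP; lia].
Qed.

Lemma predsucc (p : seq nat) : cayley p -> map succn (map predn p) = p.
Proof.
move=> c; rewrite -map_comp -[RHS]map_id; apply/eq_in_map => v vp /=.
by rewrite prednK // (pos_of c vp).
Qed.

Theorem part2 n :
  #|[set t : n.-tuple 'I_n.+1 |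
      [&& cayley (map val t), ~~ contains_a (map val t) & ~~ contains_b (map val t)]]|
  = #|[set t : n.-tuple 'I_n.+1 |
      [&& cayley (map val t), uniq (map val t) & ~~ contains_f (map val t)]]|.
Proof.
pose P := fun y : seq nat => [&& cayley y, ~~ contains_a y & ~~ contains_b y].
pose Q := fun y : seq nat => [&& cayley y, uniq y & ~~ contains_f y].
have PQ : forall y, P y -> [/\ Q (Tf y), Uf (Tf y) = y & size (Tf y) = size y].
  move=> y /and3P [c na nb]; have g : good y by apply/goodP.
  split.
  - exact: Tf_F.
  - by rewrite /Uf /Tf -map_comp map_id Us_Ts.
  - by rewrite /Tf size_map size_sort size_iota.
have QP : forall y, Q y -> [/\ P (Uf y), Tf (Uf y) = y & size (Uf y) = size y].
  move=> y /and3P [c u nf].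
  have h := pred_perm (F_perm c u).
  have hf := nof_of c nf.
  have [cU gU] := Us_A h hf.
  split.
  - by case/goodP: gU => na nb; apply/and3P.
  - by rewrite /Uf /Tf (Ts_Us h hf) predsucc.
  - by rewrite /Uf size_map size_iota size_map.
have bP : forall y, P y -> all (fun v => v <= size y) y.
  by move=> y /and3P [c _ _]; exact: cayley_bound.
have bQ : forall y, Q y -> all (fun v => v <= size y) y.
  by move=> y /and3P [c _ _]; exact: cayley_bound.
apply/eqP; rewrite eqn_leq; apply/andP; split.
  exact: (@card_le n P Q Tf Uf PQ bQ).
exact: (@card_le n Q P Uf Tf QP bP).
Qed.

Theorem theorem7p3 :
  (forall x : seq nat,
     modasc x <-> [/\ cayley x, ~~ contains_a x & ~~ contains_b x]) /\
  (forall n : nat,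
     #|[set t : n.-tuple 'I_n.+1 |
         [&& cayley (map val t), ~~ contains_a (map val t) & ~~ contains_b (map val t)]]|
   = #|[set t : n.-tuple 'I_n.+1 |
         [&& cayley (map val t), uniq (map val t) & ~~ contains_f (map val t)]]|).
Proof.
split; [exact: part1 | exact: part2].
Qed.
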